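(* Let $M\in\mathbb N$, $a_1,\dots,a_M>0$, and functions $\phi_{i,j}$ ($i=1,2$, $j=1,\dots,M$) with $\phi_{i,j}\in\mathcal V_{a_j}$. Let $a:=\sum_{j=1}^Ma_j$ and $b>a$, and set $b_j:=b-\sum_{k\ne j}a_k$. Then $$\theta_b\Big(\prod_{j=1}^M\phi_{1,j},\ \prod_{j=1}^M\phi_{2,j}\Big)\le\sum_{j=1}^M\theta_{b_j}(\phi_{1,j},\phi_{2,j}).$$
   Context: $\mathbb T=\mathbb R/\mathbb Z$. $\mathcal V_a:=\{\psi\in C^2(\mathbb T,(0,\infty)):|\frac d{dx}\log\psi|<a\}$ (so $\mathcal V_a\subset\mathcal V_{a'}$ for $a\le a'$). For $\psi_1,\psi_2\in\mathcal V_a$, $\beta_a(\psi_1,\psi_2):=\inf\{t>0:t\psi_1-\psi_2\in\mathcal V_a\}$ and $\theta_a(\psi_1,\psi_2):=\log\beta_a(\psi_1,\psi_2)+\log\beta_a(\psi_2,\psi_1)$. *)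

(* Defs.v *)
From Stdlib Require Import Reals.
From Coquelicot Require Import Coquelicot.
Open Scope R_scope.

(* Functions on T = R/Z are represented as 1-periodic functions R -> R. *)
Definition periodic1 (f : R -> R) : Prop := forall x, f (x + 1) = f x.

Definition C2 (f : R -> R) : Prop :=
  (forall x, ex_derive f x) /\
  (forall x, ex_derive (Derive f) x) /\
  (forall x, continuous (Derive_n f 2) x).

Definition C2pos_T (psi : R -> R) : Prop :=
  periodic1 psi /\ C2 psi /\ (forall x, 0 < psi x).

Definition V (a : R) (psi : R -> R) : Prop :=
  C2pos_T psi /\ forall x, Rabs (Derive (fun y => ln (psi y)) x) < a.

Definition beta (a : R) (psi1 psi2 : R -> R) : R :=
  real (Glb_Rbar (fun t => 0 < t /\ V a (fun x => t * psi1 x - psi2 x))).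

Definition theta (a : R) (psi1 psi2 : R -> R) : R :=
  ln (beta a psi1 psi2) + ln (beta a psi2 psi1).

Fixpoint sumR (n : nat) (g : nat -> R) : R :=
  match n with O => 0 | S m => sumR m g + g m end.
Fixpoint prodR (n : nat) (g : nat -> R) : R :=
  match n with O => 1 | S m => prodR m g * g m end.

(* Main.v *)
Require Import Defs.
From Stdlib Require Import Reals Lra Lia ZArith FunctionalExtensionality.
From Coquelicot Require Import Coquelicot.
Open Scope R_scope.

Definition D2 (h h1 h2 : R -> R) :=
  (forall x, is_derive h x (h1 x)) /\ (forall x, is_derive h1 x (h2 x)) /\
  (forall x, continuous h2 x).

Lemma D2_Derive h h1 h2 : D2 h h1 h2 -> forall x, Derive h x = h1 x.
Proof. intros [H _] x; now apply is_derive_unique. Qed.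

Lemma C2_D2 h : C2 h -> D2 h (Derive h) (Derive (Derive h)).
Proof.
  intros [H1 [H2 H3]]; split; [|split].
  - intro x; now apply Derive_correct.
  - intro x; now apply Derive_correct.
  - exact H3.
Qed.

Lemma D2_C2 h h1 h2 : D2 h h1 h2 -> C2 h.
Proof.
  intros [H1 [H2 H3]].
  assert (E1 : Derive h = h1).
  { apply functional_extensionality; intro; now apply is_derive_unique. }
  assert (E2 : Derive h1 = h2).
  { apply functional_extensionality; intro; now apply is_derive_unique. }
  split; [|split].
  - intro x; eexists; apply H1.
  - intro x; rewrite E1; eexists; apply H2.
  - intro x; change (continuous (Derive (Derive h)) x); rewrite E1, E2; apply H3.
Qed.

Lemma D2_cont h h1 h2 : D2 h h1 h2 -> forall x, continuous h x /\ continuous h1 x.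
Proof.
  intros [H1 [H2 H3]] x; split; apply (@ex_derive_continuous R_AbsRing R_NormedModule); eexists; eauto.
Qed.

Lemma isd_mult (f g : R -> R) x df dg : is_derive f x df -> is_derive g x dg ->
  is_derive (fun y => f y * g y) x (df * g x + f x * dg).
Proof. intros A B; apply (is_derive_mult f g); auto; intros; apply Rmult_comm. Qed.
Lemma isd_plus (f g : R -> R) x df dg : is_derive f x df -> is_derive g x dg ->
  is_derive (fun y => f y + g y) x (df + dg).
Proof. intros A B; apply (is_derive_plus f g); auto. Qed.
Lemma cont_mult (f g : R -> R) x : continuous f x -> continuous g x -> continuous (fun y => f y * g y) x.
Proof. intros; apply (continuous_mult f g); auto. Qed.
Lemma cont_plus (f g : R -> R) x : continuous f x -> continuous g x -> continuous (fun y => f y + g y) x.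
Proof. intros; apply (continuous_plus f g); auto. Qed.

Lemma D2_plus f f1 f2 g g1 g2 : D2 f f1 f2 -> D2 g g1 g2 ->
  D2 (fun x => f x + g x) (fun x => f1 x + g1 x) (fun x => f2 x + g2 x).
Proof.
  intros [F1 [F2 F3]] [G1 [G2 G3]]; split; [|split]; intro x.
  - apply isd_plus; auto.
  - apply isd_plus; auto.
  - apply cont_plus; auto.
Qed.

Lemma D2_mult f f1 f2 g g1 g2 : D2 f f1 f2 -> D2 g g1 g2 ->
  D2 (fun x => f x * g x) (fun x => f1 x * g x + f x * g1 x)
     (fun x => (f2 x * g x + f1 x * g1 x) + (f1 x * g1 x + f x * g2 x)).
Proof.
  intros HF HG.
  pose proof (D2_cont _ _ _ HF) as CF. pose proof (D2_cont _ _ _ HG) as CG.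
  destruct HF as [F1 [F2 F3]], HG as [G1 [G2 G3]]; split; [|split]; intro x.
  - apply isd_mult; auto.
  - apply isd_plus; apply isd_mult; auto.
  - repeat apply cont_plus; apply cont_mult; try apply CF; try apply CG; auto.
Qed.

Lemma D2_const c : D2 (fun _ => c) (fun _ => 0) (fun _ => 0).
Proof.
  split; [|split]; intro x.
  - apply (is_derive_const c).
  - apply (is_derive_const 0).
  - apply continuous_const.
Qed.

Lemma C2_plus f g : C2 f -> C2 g -> C2 (fun x => f x + g x).
Proof. intros A B; eapply D2_C2, D2_plus; apply C2_D2; eauto. Qed.
Lemma C2_mult f g : C2 f -> C2 g -> C2 (fun x => f x * g x).
Proof. intros A B; eapply D2_C2, D2_mult; apply C2_D2; eauto. Qed.
Lemma C2_const c : C2 (fun _ => c).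
Proof. eapply D2_C2, D2_const. Qed.
Lemma C2_scal t f : C2 f -> C2 (fun x => t * f x).
Proof. intro A; apply (C2_mult (fun _ => t)); auto using C2_const. Qed.
Lemma C2_minus f g : C2 f -> C2 g -> C2 (fun x => f x - g x).
Proof.
  intros A B.
  assert (E : (fun x => f x - g x) = fun x => f x + (-1) * g x).
  { apply functional_extensionality; intro; ring. }
  rewrite E; apply C2_plus; auto; apply C2_scal; auto.
Qed.

Lemma C2_ex f : C2 f -> forall x, ex_derive f x.
Proof. intros [A _]; auto. Qed.

Lemma Derive_ln h : C2 h -> (forall x, 0 < h x) ->
  forall x, Derive (fun y => ln (h y)) x = Derive h x / h x.
Proof.
  intros HC Hp x; apply is_derive_unique.
  eapply is_derive_ext.
  2:{ apply (is_derive_comp ln h); [apply is_derive_ln, Hp | apply Derive_correct, C2_ex, HC]. }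
  intro; reflexivity.
Qed.

Lemma abs_div_lt (u h c : R) : 0 < h -> (Rabs (u / h) < c <-> Rabs u < c * h).
Proof.
  intro Hh. rewrite Rabs_div by lra. rewrite (Rabs_pos_eq h) by lra.
  split; intro H.
  - apply (Rmult_lt_compat_r h) in H; auto.
    unfold Rdiv in H; rewrite Rmult_assoc, Rinv_l in H; lra.
  - apply (Rmult_lt_reg_r h); auto. unfold Rdiv; rewrite Rmult_assoc, Rinv_l; lra.
Qed.

Lemma Vchar c h : V c h <->
  periodic1 h /\ C2 h /\ (forall x, 0 < h x) /\ (forall x, Rabs (Derive h x) < c * h x).
Proof.
  split.
  - intros [[P [C Pos]] D]; refine (conj P (conj C (conj Pos _))).
    intro x; specialize (D x); rewrite Derive_ln in D; auto.
    apply abs_div_lt; auto.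
  - intros [P [C [Pos D]]]; split; [exact (conj P (conj C Pos))|].
    intro x; rewrite Derive_ln; auto; apply abs_div_lt; auto.
Qed.

Definition G (c : R) (h : R -> R) :=
  periodic1 h /\ C2 h /\ (forall x, 0 <= h x) /\ (forall x, Rabs (Derive h x) <= c * h x).

Lemma V_G c h : V c h -> G c h.
Proof.
  intro H; apply Vchar in H; destruct H as [P [C [Pos D]]].
  refine (conj P (conj C (conj _ _))); intro x; [apply Rlt_le, Pos | apply Rlt_le, D].
Qed.

Lemma G_ext c f g : (forall x, f x = g x) -> G c f -> G c g.
Proof.
  intros E H; replace g with f; auto; apply functional_extensionality; auto.
Qed.

Lemma V_ext c f g : (forall x, f x = g x) -> V c f -> V c g.
Proof.
  intros E H; replace g with f; auto; apply functional_extensionality; auto.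
Qed.

Lemma G_mono c c' h : c <= c' -> G c h -> G c' h.
Proof.
  intros Hc [P [C [Pos D]]]; split; [|split; [|split]]; auto.
  intro x; specialize (D x); specialize (Pos x); nra.
Qed.

Lemma G_plus c f g : G c f -> G c g -> G c (fun x => f x + g x).
Proof.
  intros [P1 [C1 [Pos1 D1]]] [P2 [C2' [Pos2 D2']]]; split; [|split; [|split]].
  - intro x; unfold periodic1 in *; rewrite P1, P2; auto.
  - apply C2_plus; auto.
  - intro x; specialize (Pos1 x); specialize (Pos2 x); lra.
  - intro x. rewrite Derive_plus by (apply C2_ex; auto).
    specialize (D1 x); specialize (D2' x).
    pose proof (Rabs_triang (Derive f x) (Derive g x)); nra.
Qed.

Lemma G_mult c d f g : G c f -> G d g -> G (c + d) (fun x => f x * g x).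
Proof.
  intros [P1 [C1 [Pos1 D1]]] [P2 [C2' [Pos2 D2']]]; split; [|split; [|split]].
  - intro x; unfold periodic1 in *; rewrite P1, P2; auto.
  - apply C2_mult; auto.
  - intro x; specialize (Pos1 x); specialize (Pos2 x); nra.
  - intro x. rewrite Derive_mult by (apply C2_ex; auto).
    specialize (D1 x); specialize (D2' x); specialize (Pos1 x); specialize (Pos2 x).
    pose proof (Rabs_triang (Derive f x * g x) (f x * Derive g x)).
    rewrite !Rabs_mult in H. rewrite (Rabs_pos_eq (g x)), (Rabs_pos_eq (f x)) in H by auto.
    assert (Rabs (Derive f x) * g x <= c * f x * g x) by (apply Rmult_le_compat_r; auto).
    assert (f x * Rabs (Derive g x) <= f x * (d * g x)) by (apply Rmult_le_compat_l; auto).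
    nra.
Qed.

Lemma G_const c t : 0 <= c -> 0 <= t -> G c (fun _ => t).
Proof.
  intros Hc Ht; split; [|split; [|split]]; auto using C2_const.
  - intro; reflexivity.
  - intro x; rewrite Derive_const, Rabs_R0; nra.
Qed.

Lemma G_scal c t f : 0 <= t -> G c f -> G c (fun x => t * f x).
Proof.
  intros Ht H. replace c with (0 + c) by ring.
  apply (G_mult 0 c (fun _ => t) f); auto; apply G_const; lra.
Qed.

Lemma G_strict_V c e f g : 0 < e ->
  G c f -> G (c + e) g -> (forall x, 0 < f x) -> V (c + e) (fun x => f x + g x).
Proof.
  intros He [P1 [C1 [Pos1 D1]]] [P2 [C2' [Pos2 D2']]] Fpos; apply Vchar; split; [|split; [|split]].
  - intro x; unfold periodic1 in *; rewrite P1, P2; auto.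
  - apply C2_plus; auto.
  - intro x; specialize (Fpos x); specialize (Pos2 x); lra.
  - intro x. rewrite Derive_plus by (apply C2_ex; auto).
    specialize (D1 x); specialize (D2' x); specialize (Fpos x); specialize (Pos2 x).
    pose proof (Rabs_triang (Derive f x) (Derive g x)); nra.
Qed.

Lemma V_plus c f g : V c f -> V c g -> V c (fun x => f x + g x).
Proof.
  intros A B. apply Vchar in A; apply Vchar in B; apply Vchar.
  destruct A as [P1 [C1 [Pos1 D1]]], B as [P2 [C2' [Pos2 D2']]]; split; [|split; [|split]].
  - intro x; unfold periodic1 in *; rewrite P1, P2; auto.
  - apply C2_plus; auto.
  - intro x; specialize (Pos1 x); specialize (Pos2 x); lra.
  - intro x. rewrite Derive_plus by (apply C2_ex; auto).
    specialize (D1 x); specialize (D2' x).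
    pose proof (Rabs_triang (Derive f x) (Derive g x)); nra.
Qed.

Lemma V_scal c t f : 0 < t -> V c f -> V c (fun x => t * f x).
Proof.
  intros Ht A. apply Vchar in A; apply Vchar.
  destruct A as [P1 [C1 [Pos1 D1]]]; split; [|split; [|split]].
  - intro x; unfold periodic1 in *; rewrite P1; auto.
  - apply C2_scal; auto.
  - intro x; specialize (Pos1 x); nra.
  - intro x. rewrite Derive_scal, Rabs_mult, (Rabs_pos_eq t) by lra.
    specialize (D1 x); nra.
Qed.

Lemma V_mono c c' f : c <= c' -> V c f -> V c' f.
Proof.
  intros Hc A. apply Vchar in A; apply Vchar.
  destruct A as [P1 [C1 [Pos1 D1]]]; split; [|split; [|split]]; auto.
  intro x; specialize (D1 x); specialize (Pos1 x); nra.
Qed.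

Lemma per_nat F : periodic1 F -> forall n x, F (x + INR n) = F x /\ F (x - INR n) = F x.
Proof.
  intros P n; induction n as [|n IH]; intro x.
  - simpl INR; split; f_equal; ring.
  - rewrite S_INR. destruct (IH x) as [A B]. split.
    + replace (x + (INR n + 1)) with ((x + INR n) + 1) by ring. rewrite P; auto.
    + rewrite <- (P (x - (INR n + 1))). replace (x - (INR n + 1) + 1) with (x - INR n) by ring. auto.
Qed.

Lemma reduce x : exists y, 0 <= y <= 1 /\ forall F, periodic1 F -> F x = F y.
Proof.
  destruct (archimed x) as [A B].
  exists (x - IZR (up x) + 1); split; [lra|].
  intros F P.
  destruct (Z.lt_ge_cases 0 (up x)) as [H|H].
  - replace (up x) with (Z.of_nat (Z.to_nat (up x - 1)) + 1)%Z by lia.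
    rewrite plus_IZR, <- INR_IZR_INZ.
    replace (x - (INR (Z.to_nat (up x - 1)) + 1) + 1) with (x - INR (Z.to_nat (up x - 1))) by ring.
    symmetry; apply per_nat; auto.
  - replace (up x) with (- Z.of_nat (Z.to_nat (1 - up x)) + 1)%Z by lia.
    rewrite plus_IZR, opp_IZR, <- INR_IZR_INZ.
    replace (x - (- INR (Z.to_nat (1 - up x)) + 1) + 1) with (x + INR (Z.to_nat (1 - up x))) by ring.
    symmetry; apply per_nat; auto.
Qed.

Lemma Derive_per f : C2 f -> periodic1 f -> periodic1 (Derive f).
Proof.
  intros C P x.
  symmetry; apply is_derive_unique.
  apply (is_derive_ext (fun y => f (y + 1))); [intro; apply P|].
  eapply is_derive_ext; [intro; reflexivity|].
  assert (H : is_derive (fun y => f (y + 1)) x (scal 1 (Derive f (x + 1)))).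
  { apply (is_derive_comp f (fun y => y + 1)).
    - apply Derive_correct, C2_ex, C.
    - auto_derive; auto; ring. }
  replace (scal 1 (Derive f (x + 1))) with (Derive f (x + 1)) in H; auto.
  unfold scal; simpl; unfold mult; simpl; ring.
Qed.

Lemma C2_cont f : C2 f -> forall x, continuous f x /\ continuous (Derive f) x.
Proof. intro C; apply (D2_cont _ _ _ (C2_D2 f C)). Qed.

Lemma cpt (F : R -> R) : (forall x, continuous F x) -> forall c, continuity_pt F c.
Proof. intros H c; apply continuity_pt_filterlim; apply H. Qed.

Lemma nonempty a c f g : V a f -> V a g -> a < c -> exists t, 0 < t /\ V c (fun x => t * f x - g x).
Proof.
  intros Hf Hg Hac. apply Vchar in Hf; apply Vchar in Hg.
  destruct Hf as [Pf [Cf [Posf Df]]], Hg as [Pg [Cg [Posg Dg]]].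
  pose proof (C2_cont f Cf) as CF. pose proof (C2_cont g Cg) as CG.
  pose proof (Derive_per f Cf Pf) as PF'. pose proof (Derive_per g Cg Pg) as PG'.
  set (Fr := fun x => Rabs (Derive f x) / f x).
  assert (CFr : forall x, continuous Fr x).
  { intro x; unfold Fr, Rdiv. apply cont_mult.
    - apply (continuous_Rabs_comp (Derive f)); apply CF.
    - apply continuous_Rinv_comp; [apply CF | specialize (Posf x); lra]. }
  destruct (continuity_ab_maj Fr 0 1 ltac:(lra) (fun c _ => cpt Fr CFr c)) as [m0 [Hm0 _]].
  destruct (continuity_ab_min f 0 1 ltac:(lra) (fun c _ => cpt f (fun x => proj1 (CF x)) c)) as [y0 [Hy0 _]].
  set (Gb := fun x => Rabs (Derive g x) + c * g x).
  assert (CGb : forall x, continuous Gb x).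
  { intro x; unfold Gb; apply cont_plus.
    - apply (continuous_Rabs_comp (Derive g)); apply CG.
    - apply (cont_mult (fun _ => c)); [apply continuous_const | apply CG]. }
  destruct (continuity_ab_maj Gb 0 1 ltac:(lra) (fun c _ => cpt Gb CGb c)) as [y1 [Hy1 _]].
  set (m := Fr m0). set (fm := f y0). set (K := Gb y1).
  assert (Hm : m < a).
  { unfold m, Fr. pose proof (Posf m0); pose proof (Df m0).
    apply (Rmult_lt_reg_r (f m0)); auto; unfold Rdiv; rewrite Rmult_assoc, Rinv_l; lra. }
  assert (Hm0' : 0 <= m).
  { unfold m, Fr. unfold Rdiv. apply Rmult_le_pos; [apply Rabs_pos|]. apply Rlt_le, Rinv_0_lt_compat, Posf. }
  assert (Hfm : 0 < fm) by apply Posf.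
  assert (HK : 0 <= K).
  { unfold K, Gb. pose proof (Rabs_pos (Derive g y1)). pose proof (Posg y1). nra. }
  assert (BF : forall x, Rabs (Derive f x) <= m * f x /\ fm <= f x /\ Rabs (Derive g x) + c * g x <= K).
  { intro x. destruct (reduce x) as [y [Hy E]].
    rewrite (E f Pf), (E _ PF'), (E g Pg), (E _ PG').
    split; [|split].
    - specialize (Hm0 y Hy). unfold m. unfold Fr in Hm0 |- *.
      pose proof (Posf y).
      apply (Rmult_le_compat_r (f y)) in Hm0; [|lra].
      unfold Rdiv in Hm0; rewrite Rmult_assoc, Rinv_l in Hm0; lra.
    - apply Hy0; auto.
    - apply (Hy1 y Hy). }
  set (t := (K + 1) / ((c - m) * fm)).
  assert (Ht : 0 < t).
  { unfold t. apply Rdiv_lt_0_compat; [lra|]. apply Rmult_lt_0_compat; lra. }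
  assert (Ht2 : t * ((c - m) * fm) = K + 1).
  { unfold t. field. split; lra. }
  exists t; split; auto.
  assert (Hmain : forall x, Rabs (t * Derive f x - Derive g x) < c * (t * f x - g x)).
  { intro x. destruct (BF x) as [B1 [B2 B3]].
    pose proof (Rabs_triang (t * Derive f x) (- Derive g x)).
    rewrite Rabs_mult, (Rabs_pos_eq t), Rabs_Ropp in H by lra.
    assert (t * Rabs (Derive f x) <= t * (m * f x)) by (apply Rmult_le_compat_l; lra).
    assert (t * ((c - m) * fm) <= t * ((c - m) * f x)).
    { apply Rmult_le_compat_l; [lra|]. apply Rmult_le_compat_l; lra. }
    unfold Rminus at 1. nra. }
  apply Vchar; split; [|split; [|split]].
  - intro x; unfold periodic1 in *; rewrite Pf, Pg; auto.
  - apply C2_minus; auto; apply C2_scal; auto.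
  - intro x. specialize (Hmain x). pose proof (Rabs_pos (t * Derive f x - Derive g x)).
    assert (0 < c) by lra. nra.
  - intro x. rewrite Derive_minus, Derive_scal.
    + apply Hmain.
    + apply C2_ex, C2_scal, Cf.
    + apply C2_ex, Cg.
Qed.

From Stdlib Require Import Classical.

Lemma glb_facts (E : R -> Prop) x0 l : E x0 -> 0 < l -> (forall x, E x -> l <= x) ->
  l <= real (Glb_Rbar E) /\ (forall x, E x -> real (Glb_Rbar E) <= x) /\
  (forall y, real (Glb_Rbar E) < y -> exists x, E x /\ x < y).
Proof.
  intros H0 Hl Hb. destruct (Glb_Rbar_correct E) as [lb glb].
  assert (Hg := glb (Finite l) (fun x Ex => Hb x Ex)).
  specialize (lb x0 H0) as Hx0.
  destruct (Glb_Rbar E) as [r| |]; simpl in *; try contradiction.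
  split; [auto|split].
  - intros x Ex; apply (lb x Ex).
  - intros y Hy. destruct (classic (exists x, E x /\ x < y)) as [H|H]; auto.
    exfalso. assert (Hy' : Rbar_le (Finite y) (Finite r)).
    { apply glb. intros x Ex. simpl. destruct (Rle_dec y x) as [A|A]; auto.
      exfalso; apply H; exists x; split; auto; lra. }
    simpl in Hy'; lra.
Qed.

Definition Sset c f g := fun t => 0 < t /\ V c (fun x => t * f x - g x).

Lemma Sset_lb c f g t : (0 < f 0) -> (0 < g 0) -> Sset c f g t -> g 0 / f 0 <= t.
Proof.
  intros Hf Hg [Ht HV]. apply Vchar in HV. destruct HV as [_ [_ [Pos _]]].
  specialize (Pos 0). apply Rlt_le. apply (Rmult_lt_reg_r (f 0)); auto.
  unfold Rdiv; rewrite Rmult_assoc, Rinv_l; lra.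
Qed.

Lemma V_pos c f : V c f -> forall x, 0 < f x.
Proof. intros [[_ [_ P]] _]; auto. Qed.

Lemma beta_props a c f g : V a f -> V a g -> a < c ->
  0 < beta c f g /\ (forall t, beta c f g < t -> Sset c f g t).
Proof.
  intros Hf Hg Hac.
  destruct (nonempty a c f g Hf Hg Hac) as [t0 Ht0].
  assert (Hl : 0 < g 0 / f 0).
  { apply Rdiv_lt_0_compat; eapply V_pos; eauto. }
  destruct (glb_facts (Sset c f g) t0 (g 0 / f 0) Ht0 Hl
     (fun t => Sset_lb c f g t (V_pos _ _ Hf 0) (V_pos _ _ Hg 0))) as [A [B C]].
  unfold beta; fold (Sset c f g). split; [lra|].
  intros y Hy. destruct (C y Hy) as [x [[Hx0 Hx] Hxy]]. split; [lra|].
  apply (V_ext c (fun z => (y - x) * f z + (x * f z - g z))); [intro; ring|].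
  apply V_plus; auto. apply V_scal; [lra|]. apply (V_mono a); [lra|auto].
Qed.

Lemma prodR_mult n u v : prodR n (fun j => u j * v j) = prodR n u * prodR n v.
Proof. induction n; simpl; [ring|rewrite IHn; ring]. Qed.

Lemma prodR_pos n u : (forall j, (j < n)%nat -> 0 < u j) -> 0 < prodR n u.
Proof.
  induction n; intro H; simpl; [lra|].
  apply Rmult_lt_0_compat; [apply IHn; intros; apply H; lia | apply H; lia].
Qed.

Lemma ln_prodR n u : (forall j, (j < n)%nat -> 0 < u j) ->
  ln (prodR n u) = sumR n (fun j => ln (u j)).
Proof.
  induction n; intro H; simpl; [apply ln_1|].
  rewrite ln_mult; [rewrite IHn; auto; intros; apply H; lia| |apply H; lia].
  apply prodR_pos; intros; apply H; lia.
Qed.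

Lemma sumR_ext n u v : (forall j, (j < n)%nat -> u j = v j) -> sumR n u = sumR n v.
Proof. induction n; intro H; simpl; auto. rewrite IHn, H; auto; intros; apply H; lia. Qed.

Lemma sumR_plus n u v : sumR n (fun j => u j + v j) = sumR n u + sumR n v.
Proof. induction n; simpl; [ring|rewrite IHn; ring]. Qed.

Lemma prodR_exp n u e : prodR n (fun j => u j * exp e) = prodR n u * exp (INR n * e).
Proof.
  induction n; simpl prodR.
  - simpl INR; rewrite Rmult_0_l, exp_0; ring.
  - rewrite IHn, S_INR. replace ((INR n + 1) * e) with (INR n * e + e) by ring.
    rewrite exp_plus; ring.
Qed.

Lemma sumR_if n a j : (j < n)%nat ->
  sumR n (fun k => if Nat.eqb k j then 0 else a k) = sumR n a - a j.
Proof.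
  induction n; intro H; [lia|]. simpl.
  destruct (Nat.eqb n j) eqn:E.
  - apply Nat.eqb_eq in E; subst.
    rewrite (sumR_ext _ _ a); [ring|].
    intros k Hk; destruct (Nat.eqb k j) eqn:E'; auto; apply Nat.eqb_eq in E'; lia.
  - apply Nat.eqb_neq in E. rewrite IHn by lia; ring.
Qed.

Lemma telescope (n : nat) (a t : nat -> R) (f g : nat -> R -> R) d : 0 <= d ->
  (forall j, (j < n)%nat -> G (a j) (f j) /\ G (a j) (g j) /\ 0 <= t j /\
     G (a j + d) (fun x => t j * f j x - g j x)) ->
  G (sumR n a) (fun x => prodR n (fun j => g j x)) /\
  G (sumR n a) (fun x => prodR n (fun j => t j * f j x)) /\
  G (sumR n a + d) (fun x => prodR n (fun j => t j * f j x) - prodR n (fun j => g j x)).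
Proof.
  intro Hd; induction n as [|n IH]; intro H.
  - cbn [sumR prodR]. split; [|split]; try (apply G_const; lra).
  - assert (IH' := IH ltac:(intros; apply H; lia)); destruct IH' as [IQ [IP IZ]].
    destruct (H n ltac:(lia)) as [Hf [Hg [Ht Hh]]].
    assert (Htf : G (a n) (fun x => t n * f n x)) by (apply G_scal; auto).
    cbn [sumR prodR]. split; [|split].
    + apply (G_mult _ _ (fun x => prodR n (fun j => g j x)) (g n)); auto.
    + apply (G_mult _ _ (fun x => prodR n (fun j => t j * f j x)) (fun x => t n * f n x)); auto.
    + apply (G_ext _ (fun x =>
         (prodR n (fun j => t j * f j x) - prodR n (fun j => g j x)) * (t n * f n x) +
         prodR n (fun j => g j x) * (t n * f n x - g n x))); [intro; ring|].
      apply G_plus.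
      * apply (G_mono (sumR n a + d + a n)); [lra|].
        apply (G_mult _ _ (fun x => prodR n (fun j => t j * f j x) - prodR n (fun j => g j x))
                 (fun x => t n * f n x)); auto.
      * apply (G_mono (sumR n a + (a n + d))); [lra|].
        apply (G_mult _ _ (fun x => prodR n (fun j => g j x)) (fun x => t n * f n x - g n x)); auto.
Qed.

Lemma half (M : nat) (a : nat -> R) (phi1 phi2 : nat -> R -> R) (b : R) :
  (forall j, (j < M)%nat -> 0 < a j) ->
  (forall j, (j < M)%nat -> V (a j) (phi1 j) /\ V (a j) (phi2 j)) ->
  sumR M a < b ->
  ln (beta b (fun x => prodR M (fun j => phi1 j x)) (fun x => prodR M (fun j => phi2 j x)))
  <= sumR M (fun j => ln (beta (a j + (b - sumR M a)) (phi1 j) (phi2 j))).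
Proof.
  intros Ha HV Hb. set (d := b - sumR M a).
  set (be := fun j => beta (a j + d) (phi1 j) (phi2 j)).
  assert (BP : forall j, (j < M)%nat -> 0 < be j /\
     (forall t, be j < t -> Sset (a j + d) (phi1 j) (phi2 j) t)).
  { intros j Hj. destruct (HV j Hj). apply (beta_props (a j)); auto. unfold d; lra. }
  set (P1 := fun x => prodR M (fun j => phi1 j x)).
  set (P2 := fun x => prodR M (fun j => phi2 j x)).
  assert (HP1 : forall x, 0 < P1 x).
  { intro; apply prodR_pos; intros j Hj; eapply V_pos, (HV j Hj). }
  assert (HP2 : forall x, 0 < P2 x).
  { intro; apply prodR_pos; intros j Hj; eapply V_pos, (HV j Hj). }
  assert (Mem : forall e, 0 < e -> Sset b P1 P2 (exp e * prodR M (fun j => be j * exp e))).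
  { intros e He. set (t := fun j => be j * exp e).
    assert (Ht : forall j, (j < M)%nat -> 0 < t j /\ Sset (a j + d) (phi1 j) (phi2 j) (t j)).
    { intros j Hj. destruct (BP j Hj) as [B1 B2]. unfold t.
      assert (1 < exp e) by (rewrite <- exp_0; apply exp_increasing; auto).
      split; [nra|]. apply B2; nra. }
    destruct (telescope M a t phi1 phi2 d) as [_ [GP GZ]]; [unfold d; lra| |].
    { intros j Hj. destruct (HV j Hj) as [V1 V2]. destruct (Ht j Hj) as [T1 [_ T2]].
      split; [apply V_G; auto|split; [apply V_G; auto|split; [lra|apply V_G; auto]]]. }
    assert (Hpt : 0 < prodR M t) by (apply prodR_pos; intros; apply Ht; auto).
    assert (He1 : 1 < exp e) by (rewrite <- exp_0; apply exp_increasing; auto).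
    split; [apply Rmult_lt_0_compat; [apply exp_pos | auto]|].
    apply (V_ext b (fun x => (exp e - 1) * prodR M (fun j => t j * phi1 j x) +
        (prodR M (fun j => t j * phi1 j x) - prodR M (fun j => phi2 j x)))).
    { intro x; unfold P1, P2; rewrite prodR_mult; ring. }
    replace b with (sumR M a + d) by (unfold d; ring).
    apply G_strict_V; auto; [unfold d; lra| apply G_scal; auto; lra |].
    intro x. apply Rmult_lt_0_compat; [lra|]. rewrite prodR_mult.
    apply Rmult_lt_0_compat; auto. fold (P1 x); auto. }
  assert (HM1 : Sset b P1 P2 (exp 1 * prodR M (fun j => be j * exp 1))) by (apply Mem; lra).
  assert (Hl : 0 < P2 0 / P1 0) by (apply Rdiv_lt_0_compat; auto).
  destruct (glb_facts (Sset b P1 P2) _ _ HM1 Hl (fun t => Sset_lb b P1 P2 t (HP1 0) (HP2 0)))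
    as [L1 [L2 _]].
  fold (beta b P1 P2) in L1, L2.
  assert (Bpos : 0 < prodR M be) by (apply prodR_pos; intros; apply BP; auto).
  rewrite <- ln_prodR by (intros; apply BP; auto).
  assert (Key : forall e, 0 < e -> ln (beta b P1 P2) <= (INR M + 1) * e + ln (prodR M be)).
  { intros e He. specialize (L2 _ (Mem e He)). rewrite prodR_exp in L2.
    apply ln_le in L2; [|lra].
    rewrite ln_mult, ln_mult, !ln_exp in L2; try apply exp_pos; auto.
    - change (ln (beta b P1 P2) <= e + (ln (prodR M be) + INR M * e)) in L2; lra.
    - apply Rmult_lt_0_compat; auto; apply exp_pos. }
  destruct (Rle_dec (ln (beta b P1 P2)) (ln (prodR M be))) as [Hc|Hc]; auto.
  exfalso. pose proof (pos_INR M).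
  set (e := (ln (beta b P1 P2) - ln (prodR M be)) / (2 * (INR M + 1))).
  assert (He : 0 < e) by (unfold e; apply Rdiv_lt_0_compat; lra).
  specialize (Key e He).
  assert (E : (INR M + 1) * e = (ln (beta b P1 P2) - ln (prodR M be)) / 2).
  { unfold e; field; lra. }
  lra.
Qed.

(* indices j = 1..M are represented as j = 0..M-1 *)
Theorem propositionA5 (M : nat) (a : nat -> R) (phi1 phi2 : nat -> R -> R) (b : R) :
  (forall j, (j < M)%nat -> 0 < a j) ->
  (forall j, (j < M)%nat -> V (a j) (phi1 j) /\ V (a j) (phi2 j)) ->
  sumR M a < b ->
  theta b (fun x => prodR M (fun j => phi1 j x)) (fun x => prodR M (fun j => phi2 j x))
  <= sumR M (fun j =>
       theta (b - sumR M (fun k => if Nat.eqb k j then 0 else a k)) (phi1 j) (phi2 j)).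
Proof.
  intros Ha HV Hb.
  rewrite (sumR_ext _ _ (fun j => ln (beta (a j + (b - sumR M a)) (phi1 j) (phi2 j)) +
                                  ln (beta (a j + (b - sumR M a)) (phi2 j) (phi1 j)))).
  - rewrite sumR_plus. unfold theta.
    apply Rplus_le_compat; apply half; auto.
    intros j Hj; destruct (HV j Hj); auto.
  - intros j Hj. unfold theta. rewrite sumR_if by auto.
    replace (b - (sumR M a - a j)) with (a j + (b - sumR M a)) by ring. reflexivity.
Qed.
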